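(* Let $\mathbf{x}_t$ solve $\mathrm d\mathbf{x}_t=a(\mathbf{x}_t)\,\mathrm dt+b(\mathbf{x}_t)\,\mathrm d\mathbf{w}_t$ on $\mathbb R^d$ with $\mathbf{x}_0\sim p_{\mathrm{data}}$, let $q_t$ be its transition density, and let $U_s(\mathbf{y}):=-\log\int q_s(\mathbf{y}\mid\mathbf{x})\exp(-U(\mathbf{x}))\,\mathrm d\mathbf{x}$ (with $U_0=U$). Then $$\mathrm{ED}_{q_t}(p_{\mathrm{data}},U)=-\mathbb E\Big[\int_0^t\mathrm dU_s(\mathbf{x}_s)\Big],$$ where $\int_0^t\mathrm dU_s(\mathbf{x}_s)$ is the Itô integral, i.e. $U_t(\mathbf{x}_t)=U_0(\mathbf{x}_0)+\int_0^t\mathrm dU_s(\mathbf{x}_s)$, and the expectation is over the process $(\mathbf{x}_s)_{0\le s\le t}$.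
   Context: $\mathrm{ED}_q(p_{\mathrm{data}},U):=\mathbb E_{p_{\mathrm{data}}(\mathbf{x})}[U(\mathbf{x})]-\mathbb E_{p_{\mathrm{data}}(\mathbf{x})}\mathbb E_{q(\mathbf{y}\mid\mathbf{x})}[U_q(\mathbf{y})]$ with $U_q(\mathbf{y}):=-\log\int q(\mathbf{y}\mid\mathbf{x})\exp(-U(\mathbf{x}))\,\mathrm d\mathbf{x}$. *)

(* Defs.v *)
From HB Require Import structures.
From mathcomp Require Import all_boot all_order all_algebra.
From mathcomp Require Import all_classical all_reals all_analysis.
Set Implicit Arguments. Unset Strict Implicit. Unset Printing Implicit Defensive.
Import Order.TTheory GRing.Theory Num.Theory.
Local Open Scope classical_set_scope.
Local Open Scope ring_scope.
Local Open Scope ereal_scope.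

(* State space: a measurable type T with a reference measure lam (in the
   paper: R^d with Lebesgue measure, all densities w.r.t. lam).
   A conditional density q is written q y x = q(y | x). *)

Definition Uq d (T : measurableType d) (R : realType)
  (lam : {measure set T -> \bar R}) (q : T -> T -> R) (U : T -> R) (y : T)
  : \bar R :=
  - lne (\int[lam]_x ((q y x) * expR (- U x))%:E).

Definition ED d (T : measurableType d) (R : realType)
  (lam : {measure set T -> \bar R}) (q : T -> T -> R) (p : T -> R)
  (U : T -> R) : \bar R :=
  \int[lam]_x ((p x)%:E * (U x)%:E)
  - \int[lam]_x ((p x)%:E * \int[lam]_y ((q y x)%:E * Uq lam q U y)).

Definition Ufam d (T : measurableType d) (R : realType)
  (lam : {measure set T -> \bar R}) (q : R -> T -> T -> R) (U : T -> R)
  (s : R) (y : T) : \bar R :=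
  if s == 0%R then (U y)%:E else Uq lam (q s) U y.

(* The Ito integral  \int_0^t dU_s(x_s), defined (as in the statement) by
   U_t(x_t) = U_0(x_0) + \int_0^t dU_s(x_s). *)
Definition ito_dU d (T : measurableType d) (R : realType) (Omega : Type)
  (lam : {measure set T -> \bar R}) (q : R -> T -> T -> R) (U : T -> R)
  (X : R -> Omega -> T) (t : R) (w : Omega) : \bar R :=
  Ufam lam q U t (X t w) - Ufam lam q U 0%R (X 0%R w).

(* Main.v *)
Require Import Defs.
From HB Require Import structures.
From mathcomp Require Import all_boot all_order all_algebra.
From mathcomp Require Import all_classical all_reals all_analysis.
From mathcomp Require Import measurable_realfun.
Import Order.TTheory GRing.Theory Num.Theory.
Local Open Scope classical_set_scope.
Local Open Scope ring_scope.
Local Open Scope ereal_scope.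

Section dens.
Context d (T : measurableType d) (R : realType).
Variables (lam : {sigma_finite_measure set T -> \bar R})
  (nu : {finite_measure set T -> \bar R}) (h : T -> \bar R).
Hypotheses (mh : measurable_fun setT h) (h0 : forall x, 0 <= h x)
  (hnu : forall A, measurable A -> nu A = \int[lam]_(x in A) h x).

Lemma nu_dom : nu `<< lam.
Proof.
apply/null_content_dominatesP => A mA lA0; rewrite hnu//.
rewrite null_set_integral//; exact: measurable_funTS.
Qed.

Let RN := Radon_Nikodym_SigmaFinite.f nu lam.

Lemma h_int : lam.-integrable setT h.
Proof.
apply/integrableP; split; first exact: mh.
rewrite (eq_integral (fun x => h x)); last by move=> x _; rewrite gee0_abs.
rewrite -hnu//; exact: (fin_num_fun_lty (fin_num_measure nu)). 
Qed.

Lemma RN_h : ae_eq lam setT h RN.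
Proof.
apply: integral_ae_eq => //; first exact: h_int.
  exact: measurable_int (Radon_Nikodym_SigmaFinite.f_integrable nu_dom).
move=> E _ mE; rewrite -hnu//.
exact: Radon_Nikodym_SigmaFinite.f_integral nu_dom _ mE.
Qed.

Lemma dens_ge0 (f : T -> \bar R) : measurable_fun setT f -> (forall x, 0 <= f x) ->
  \int[nu]_x f x = \int[lam]_x (h x * f x).
Proof.
move=> mf f0.
rewrite -(Radon_Nikodym_SigmaFinite.change_of_variables nu_dom)//.
have mRN : measurable_fun setT RN.
  exact: measurable_int (Radon_Nikodym_SigmaFinite.f_integrable nu_dom).
transitivity (\int[lam]_x (f x * h x)).
  apply: ae_eq_integral => //.
  - exact: emeasurable_funM.
  - exact: emeasurable_funM.
  - apply: ae_eqe_mul2l; apply: ae_eq_sym; exact: RN_h.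
by apply: eq_integral => x _; rewrite muleC.
Qed.
End dens.
Lemma mulEB (R : realType) (r : R) (a b : \bar R) : (0 <= r)%R -> 0 <= a -> 0 <= b ->
  r%:E * (a - b) = r%:E * a - r%:E * b.
Proof.
move=> r0 a0 b0; have [->|rn0] := eqVneq r 0%R; first by rewrite !mul0e sube0.
have rp : (0 < r)%R by rewrite lt_neqAle eq_sym rn0.
case: a a0 => [a| |] //= a0; case: b b0 => [b| |] //= b0.
- by rewrite -EFinD -!EFinM -EFinD mulrBr.
- by rewrite addeNy gt0_muley ?lte_fin// addeNy muleC gt0_mulNye ?lte_fin.
- by rewrite addye// gt0_muley ?lte_fin// addye.
- by rewrite addeNy gt0_muley ?lte_fin// addeNy muleC gt0_mulNye ?lte_fin.
Qed.


Lemma measurable_lne_comp d (T : measurableType d) (R : realType) (I : T -> \bar R) :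
  measurable_fun setT I -> measurable_fun setT (fun y => lne (I y)).
Proof.
move=> mI.
rewrite (_ : (fun y => lne (I y)) = fun y => if I y <= 0 then -oo else er_map (@ln R) (I y)); last first.
  apply/funext => y; case: (I y) => [r| |] //=; by case: ifP.
apply: measurable_fun_ifT.
- apply: measurable_fun_lee => //.
- exact: measurable_cst.
- apply: measurableT_comp => //; exact: (@measurable_er_map _ T R (@ln R) (@measurable_ln R)).
Qed.

Lemma int_pos_lty d (T : measurableType d) (R : realType) (mu : {measure set T -> \bar R})
  (f : T -> \bar R) : mu.-integrable setT f -> \int[mu]_x f^\+ x < +oo.
Proof.
move=> fi; have /integrableP[_ H] := integrable_funepos measurableT fi.
rewrite (eq_integral (fun x => `|f^\+ x|))//.
by move=> x _; rewrite gee0_abs// funepos_ge0.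
Qed.

Lemma int_neg_lty d (T : measurableType d) (R : realType) (mu : {measure set T -> \bar R})
  (f : T -> \bar R) : mu.-integrable setT f -> \int[mu]_x f^\- x < +oo.
Proof.
move=> fi; have /integrableP[_ H] := integrable_funeneg measurableT fi.
rewrite (eq_integral (fun x => `|f^\- x|))//.
by move=> x _; rewrite gee0_abs// funeneg_ge0.
Qed.

Section main.
Context (R : realType) (dT : measure_display) (T : measurableType dT)
  (lam : {sigma_finite_measure set T -> \bar R})
  (dO : measure_display) (Omega : measurableType dO)
  (P : probability Omega R)
  (X : R -> Omega -> T) (q : R -> T -> T -> R)
  (p : T -> R) (U : T -> R) (t : R).
Hypotheses (t_gt0 : (0 < t)%R)
  (mX : forall s, (0 <= s)%R -> measurable_fun setT (X s))
  (mp : measurable_fun setT p) (p_ge0 : forall x, (0 <= p x)%R)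
  (mq : forall s, (0 < s)%R ->
          measurable_fun setT (fun yx : T * T => q s yx.1 yx.2))
  (q_ge0 : forall s y x, (0 < s)%R -> (0 <= q s y x)%R)
  (mU : measurable_fun setT U)
  (X0_law : forall A, measurable A ->
     P (X 0%R @^-1` A) = \int[lam]_(x in A) (p x)%:E)
  (Xs_trans : forall s, (0 < s)%R -> forall A B, measurable A -> measurable B ->
     P (X 0%R @^-1` A `&` X s @^-1` B)
     = \int[lam]_(x in A) ((p x)%:E * \int[lam]_(y in B) (q s y x)%:E)).

Let mqt : measurable_fun setT (fun yx : T * T => q t yx.1 yx.2) := @mq t t_gt0.
Let qt0 y x : (0 <= q t y x)%R := @q_ge0 t y x t_gt0.

Lemma mq_x y : measurable_fun setT (fun x => q t y x).
Proof. exact: (measurable_fun_pair2 y mqt). Qed.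

Lemma mq_y x : measurable_fun setT (fun y => q t y x).
Proof. exact: (measurable_fun_pair1 x mqt). Qed.

Lemma combine (a b : T -> \bar R) : measurable_fun setT a -> measurable_fun setT b ->
  (forall x, 0 <= a x) -> (forall x, 0 <= b x) ->
  \int[lam]_x ((p x)%:E * a x) < +oo -> \int[lam]_x ((p x)%:E * b x) < +oo ->
  \int[lam]_x ((p x)%:E * (a x - b x)) =
  \int[lam]_x ((p x)%:E * a x) - \int[lam]_x ((p x)%:E * b x).
Proof.
move=> ma mb a0 b0 ia ib.
have mpE : measurable_fun setT (fun x => (p x)%:E) by exact/measurable_EFinP.
rewrite -integralB//.
- by apply: eq_integral => x _; rewrite mulEB.
- apply/integrableP; split; first exact: emeasurable_funM.
  rewrite (eq_integral (fun x => (p x)%:E * a x))//.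
  by move=> x _; rewrite gee0_abs// mule_ge0// lee_fin.
- apply/integrableP; split; first exact: emeasurable_funM.
  rewrite (eq_integral (fun x => (p x)%:E * b x))//.
  by move=> x _; rewrite gee0_abs// mule_ge0// lee_fin.
Qed.

Definition r y := \int[lam]_x ((p x * q t y x)%:E).

Lemma mF : measurable_fun setT (fun z : T * T => (p z.2 * q t z.1 z.2)%:E).
Proof.
apply/measurable_EFinP; apply: measurable_funM => //.
exact: measurableT_comp mp measurable_snd.
Qed.

Lemma mr : measurable_fun setT r.
Proof.
have F0 : forall z : T * T, 0 <= (p z.2 * q t z.1 z.2)%:E.
  by move=> z; rewrite lee_fin mulr_ge0.
exact: (@measurable_fun_fubini_tonelli_F _ _ T T R lam _ mF F0).
Qed.

Lemma r_ge0 y : 0 <= r y.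
Proof. by apply: integral_ge0 => x _; rewrite lee_fin mulr_ge0. Qed.

Lemma T1 (g : T -> \bar R) : measurable_fun setT g -> (forall y, 0 <= g y) ->
  \int[lam]_y (r y * g y) =
  \int[lam]_x ((p x)%:E * \int[lam]_y ((q t y x)%:E * g y)).
Proof.
move=> mg g0.
transitivity (\int[lam]_y \int[lam]_x ((p x * q t y x)%:E * g y)).
  apply: eq_integral => y _; rewrite /r ge0_integralZr//.
  - exact: (measurable_fun_pair2 y mF).
  - by move=> x _; rewrite lee_fin mulr_ge0.
have mG : measurable_fun setT (fun z : T * T => (p z.2 * q t z.1 z.2)%:E * g z.1).
  apply: emeasurable_funM; first exact: mF.
  exact: measurableT_comp mg measurable_fst.
have G0 : forall z : T * T, 0 <= (p z.2 * q t z.1 z.2)%:E * g z.1.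
  by move=> z; rewrite mule_ge0// lee_fin mulr_ge0.
have := fubini_tonelli _ mG G0; rewrite /= => ->.
apply: eq_integral => x _; rewrite -ge0_integralZl//.
- by apply: eq_integral => y _; rewrite EFinM muleA.
- apply: emeasurable_funM => //; exact/measurable_EFinP/mq_y.
- by move=> y _; rewrite mule_ge0// lee_fin.
- by rewrite lee_fin.
Qed.

Lemma patch_indic (f : T -> \bar R) (B : set T) y :
  (f \_ B) y = f y * (\1_B y)%:E.
Proof. by rewrite patchE indicE; case: ifP => _; rewrite ?mule1 ?mule0. Qed.

Lemma hnut B : measurable B -> P (X t @^-1` B) = \int[lam]_(y in B) r y.
Proof.
move=> mB.
have -> : X t @^-1` B = X 0%R @^-1` setT `&` X t @^-1` B by rewrite preimage_setT setTI.
rewrite Xs_trans//.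
have -> : \int[lam]_(y in B) r y = \int[lam]_y (r y * (\1_B y)%:E).
  rewrite integral_mkcond; apply: eq_integral => y _; exact: patch_indic.
rewrite T1; last 2 first.
- apply/measurable_EFinP; exact: measurable_indic.
- by move=> y; rewrite lee_fin.
apply: eq_integral => x _; congr (_ * _).
rewrite integral_mkcond; apply: eq_integral => y _; by rewrite patch_indic.
Qed.

Let Xtm : {mfun Omega >-> T} :=
  HB.pack (X t) (isMeasurableFun.Build _ _ _ _ _ (@mX t (ltW t_gt0))).
Let X0m : {mfun Omega >-> T} :=
  HB.pack (X 0%R) (isMeasurableFun.Build _ _ _ _ _ (@mX 0%R (lexx 0%R))).

Lemma L1 (g : T -> \bar R) : measurable_fun setT g -> (forall y, 0 <= g y) ->
  \int[P]_w g (X t w) =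
  \int[lam]_x ((p x)%:E * \int[lam]_y ((q t y x)%:E * g y)).
Proof.
move=> mg g0.
have -> : \int[P]_w g (X t w) = \int[distribution P Xtm]_y g y.
  by rewrite ge0_integral_distribution.
rewrite (@dens_ge0 _ _ _ lam (distribution P Xtm) r mr r_ge0)//.
- exact: T1.
- by move=> A mA; rewrite -hnut.
Qed.

Lemma L0 (g : T -> \bar R) : measurable_fun setT g -> (forall y, 0 <= g y) ->
  \int[P]_w g (X 0%R w) = \int[lam]_x ((p x)%:E * g x).
Proof.
move=> mg g0.
have -> : \int[P]_w g (X 0%R w) = \int[distribution P X0m]_y g y.
  by rewrite ge0_integral_distribution.
rewrite (@dens_ge0 _ _ _ lam (distribution P X0m) (EFin \o p))//.
all: try (by move=> A mA; rewrite -X0_law).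
exact/measurable_EFinP.
Qed.

Lemma E0 (U0_int : P.-integrable setT (fun w => (U (X 0%R w))%:E)) :
  \int[P]_w (U (X 0%R w))%:E = \int[lam]_x ((p x)%:E * (U x)%:E).
Proof.
pose u := EFin \o U.
have mu : measurable_fun setT u by exact/measurable_EFinP.
rewrite integralE.
have Ep : \int[P]_w (fun w => (U (X 0%R w))%:E)^\+ w = \int[P]_w u^\+ (X 0%R w) by apply: eq_integral => w _; rewrite !funeposE.
have En : \int[P]_w (fun w => (U (X 0%R w))%:E)^\- w = \int[P]_w u^\- (X 0%R w) by apply: eq_integral => w _; rewrite !funenegE.
have mup : measurable_fun setT u^\+ by exact: measurable_funepos.
have mun : measurable_fun setT u^\- by exact: measurable_funeneg.
rewrite Ep En !L0//; try exact: funepos_ge0; try exact: funeneg_ge0.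
rewrite -combine//.
- apply: eq_integral => x _.
  have Hx : u x = u^\+ x - u^\- x by rewrite {1}(funeposneg u).
  by rewrite -Hx.
- by rewrite -L0// -Ep; exact: int_pos_lty U0_int.
- by rewrite -L0// -En; exact: int_neg_lty U0_int.
Qed.

Definition Uqt y := Uq lam (q t) U y.

Lemma mUqt : measurable_fun setT Uqt.
Proof.
have mFe : measurable_fun setT (fun z : T * T => (q t z.1 z.2 * expR (- U z.2))%:E).
  apply/measurable_EFinP; apply: measurable_funM => //.
  apply: measurableT_comp => //; apply: measurableT_comp => //.
  exact: measurableT_comp mU measurable_snd.
have Fe0 : forall z : T * T, 0 <= (q t z.1 z.2 * expR (- U z.2))%:E.
  by move=> z; rewrite lee_fin mulr_ge0// expR_ge0.
have := (@measurable_fun_fubini_tonelli_F _ _ T T R lam _ mFe Fe0) => mI.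
rewrite /Uqt /Uq; apply: measurableT_comp; first exact: oppe_measurable.
exact: (@measurable_lne_comp _ T R (fun y => \int[lam]_x (q t y x * expR (- U x))%:E) mI).
Qed.

Lemma ma_pos (g : T -> \bar R) : measurable_fun setT g -> (forall y, 0 <= g y) ->
  measurable_fun setT (fun x => \int[lam]_y ((q t y x)%:E * g y)).
Proof.
move=> mg g0.
have mG : measurable_fun setT (fun z : T * T => (q t z.2 z.1)%:E * g z.2).
  apply: emeasurable_funM; last exact: measurableT_comp mg measurable_snd.
  apply/measurable_EFinP.
  have H := measurableT_comp mqt (@measurable_swap _ _ T T); exact: H.
have G0 : forall z : T * T, 0 <= (q t z.2 z.1)%:E * g z.2.
  by move=> z; rewrite mule_ge0// lee_fin.
exact: (@measurable_fun_fubini_tonelli_F _ _ T T R lam _ mG G0).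
Qed.

Lemma E1 (Ut_int : P.-integrable setT (fun w => Uqt (X t w))) :
  \int[P]_w Uqt (X t w) =
  \int[lam]_x ((p x)%:E * \int[lam]_y ((q t y x)%:E * Uqt y)).
Proof.
rewrite integralE.
have Ep : \int[P]_w (fun w => Uqt (X t w))^\+ w = \int[P]_w Uqt^\+ (X t w) by apply: eq_integral => w _; rewrite !funeposE.
have En : \int[P]_w (fun w => Uqt (X t w))^\- w = \int[P]_w Uqt^\- (X t w) by apply: eq_integral => w _; rewrite !funenegE.
have mup : measurable_fun setT Uqt^\+ by exact/measurable_funepos/mUqt.
have mun : measurable_fun setT Uqt^\- by exact/measurable_funeneg/mUqt.
rewrite Ep En !L1//; try exact: funepos_ge0; try exact: funeneg_ge0.
rewrite -combine//.
- apply: eq_integral => x _; congr (_ * _).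
  rewrite [RHS]integralE; congr (_ - _); apply: eq_integral => y _.
  + by rewrite !funeposE maxe_pMr ?lee_fin// mule0.
  + by rewrite !funenegE maxe_pMr ?lee_fin// mule0 muleN.
- exact: ma_pos (@funepos_ge0 _ _ _).
- exact: ma_pos (@funeneg_ge0 _ _ _).
- by move=> x; apply: integral_ge0 => y _; rewrite mule_ge0// ?lee_fin ?funepos_ge0.
- by move=> x; apply: integral_ge0 => y _; rewrite mule_ge0// ?lee_fin ?funeneg_ge0.
- by rewrite -L1// -Ep; exact: int_pos_lty Ut_int.
- by rewrite -L1// -En; exact: int_neg_lty Ut_int.
Qed.

End main.

Section lamS.
Variables (R : realType) (d : measure_display) (T : measurableType d)
  (lam : {measure set T -> \bar R}) (lam_sfin : sigma_finite setT lam).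
Definition lamS (_ : sigma_finite setT lam) : set T -> \bar R := lam.
HB.instance Definition _ := Measure.copy (lamS lam_sfin) lam.
HB.instance Definition _ := Measure_isSigmaFinite.Build _ _ _ (lamS lam_sfin) lam_sfin.
End lamS.

Theorem proposition4 (R : realType)
  (dT : measure_display) (T : measurableType dT)
  (lam : {measure set T -> \bar R}) (lam_sfin : sigma_finite setT lam)
  (dO : measure_display) (Omega : measurableType dO)
  (P : probability Omega R)
  (X : R -> Omega -> T) (q : R -> T -> T -> R)
  (p_data : T -> R) (U : T -> R) (t : R)
  (* standing regularity *)
  (t_gt0 : (0 < t)%R)
  (mX : forall s, (0 <= s)%R -> measurable_fun setT (X s))
  (mp : measurable_fun setT p_data) (p_ge0 : forall x, (0 <= p_data x)%R)
  (p_int1 : \int[lam]_x (p_data x)%:E = 1)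
  (mq : forall s, (0 < s)%R ->
          measurable_fun setT (fun yx : T * T => q s yx.1 yx.2))
  (q_ge0 : forall s y x, (0 < s)%R -> (0 <= q s y x)%R)
  (q_int1 : forall s x, (0 < s)%R -> \int[lam]_y (q s y x)%:E = 1)
  (mU : measurable_fun setT U)
  (* x_0 ~ p_data *)
  (X0_law : forall A, measurable A ->
     P (X 0%R @^-1` A) = \int[lam]_(x in A) (p_data x)%:E)
  (* q_s is the transition density of the process: (x_0, x_s) has joint
     density p_data(x) q_s(y|x) *)
  (Xs_trans : forall s, (0 < s)%R -> forall A B, measurable A -> measurable B ->
     P (X 0%R @^-1` A `&` X s @^-1` B)
     = \int[lam]_(x in A) ((p_data x)%:E * \int[lam]_(y in B) (q s y x)%:E))
  (* the expectations involved are well defined *)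
  (U0_int : P.-integrable setT (fun w => (U (X 0%R w))%:E))
  (Ut_int : P.-integrable setT (fun w => Ufam lam q U t (X t w))) :
  ED lam (q t) p_data U = - \int[P]_w ito_dU lam q U X t w.
Proof.
pose L : {sigma_finite_measure set T -> \bar R} := @lamS R dT T lam lam_sfin.
have Ut' : P.-integrable setT (fun w => Uq lam (q t) U (X t w)).
  move: Ut_int; rewrite /Ufam; case: eqP => [t0|//].
  by move: t_gt0; rewrite t0 ltxx.
have e0 : \int[lam]_x ((p_data x)%:E * (U x)%:E) = \int[P]_w (U (X 0%R w))%:E.
  by rewrite (@E0 R dT T L dO Omega P X p_data U mX mp p_ge0 mU X0_law U0_int).
have e1 : \int[lam]_x ((p_data x)%:E * \int[lam]_y ((q t y x)%:E * Uq lam (q t) U y))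
    = \int[P]_w Uq lam (q t) U (X t w).
  by rewrite (@E1 R dT T L dO Omega P X q p_data U t t_gt0 mX mp p_ge0 mq q_ge0 mU Xs_trans Ut').
rewrite /ED e0 e1.
have -> : \int[P]_w ito_dU lam q U X t w =
    \int[P]_w (Uq lam (q t) U (X t w) - (U (X 0%R w))%:E).
  apply: eq_integral => w _; rewrite /ito_dU /Ufam; case: eqP => [t0|_].
    by move: t_gt0; rewrite t0 ltxx.
  by case: ifP => // /eqP.
rewrite integralB//.
have fa := integrable_fin_num measurableT U0_int.
have fb := integrable_fin_num measurableT Ut'.
rewrite -(fineK fa) -(fineK fb).
by rewrite -EFinB -EFinB -EFinN opprB.
Qed.
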